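(* In the CTMDP of Example 1 with $\lambda_1+\lambda_2<\min(\mu_1,\mu_2)$, the priority-service stationary policy $d$, defined by $d(\mathbf q)=2$ if $q_2\ge1$, $d(\mathbf q)=1$ if $q_2=0,q_1\ge1$, $d(\mathbf 0)=0$, is a $\mathbf 0$-standard policy: for every $\mathbf q\in S$, the expected time $m_{\mathbf q,\mathbf 0}(d)$ and the expected accumulated cost $c_{\mathbf q,\mathbf 0}(d)$ of a first passage from $\mathbf q$ to $\mathbf 0$ are finite.
   Context: Example 1: parameters $\lambda_1,\lambda_2,\mu_1,\mu_2,\lambda_T>0$, $h_1,h_2,c\ge0$; state space $\{(q_1,q_2):q_1,q_2\in\mathbb Z_{\ge0}\}$. Under action 1 ($q_1\ge1$): transitions to $(q_1-1,q_2)$ at rate $\mu_1$, $(q_1+1,q_2)$ at rate $\lambda_1$, $(q_1,q_2+1)$ at rate $\lambda_2$, $(q_1-1,q_2+1)$ at rate $q_1\lambda_T$. Under action 2 ($q_2\ge1$): transitions to $(q_1,q_2-1)$ at rate $\mu_2$, $(q_1+1,q_2)$ at rate $\lambda_1$, $(q_1,q_2+1)$ at rate $\lambda_2$, $(q_1-1,q_2+1)$ at rate $q_1\lambda_T$. At $\mathbf 0$ (action 0) arrivals occur at rates $\lambda_1$ to $(1,0)$ and $\lambda_2$ to $(0,1)$. Cost rate $c(\mathbf q)=h_1q_1+h_2q_2+c\lambda_Tq_1$. First passage from $\mathbf q$ to $\mathbf 0$ ends at the first time $t>0$ the process is at $\mathbf 0$ after at least one transition has occurred; $c_{\mathbf q,\mathbf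 0}(d)$ is the expected integral of $c(x(s))$ over that passage. *)

(* Defs.v *)
From Stdlib Require Import Reals List.
Open Scope R_scope.

Definition state := (nat * nat)%type.

Record params := Params {
  lam1 : R; lam2 : R; mu1 : R; mu2 : R; lamT : R;
  h1 : R; h2 : R; cc : R }.

(* For action 1 or 2, the transition to (q1-1,q2+1) has rate q1*lamT
   (it has rate 0 when q1 = 0, so the truncated target is irrelevant). *)
Definition trans (p : params) (a : nat) (q : state) : list (state * R) :=
  let (q1, q2) := q in
  match a with
  | 0%nat => ((1%nat, 0%nat), lam1 p) :: ((0%nat, 1%nat), lam2 p) :: nil
  | 1%nat => ((pred q1, q2), mu1 p) :: ((S q1, q2), lam1 p)
             :: ((q1, S q2), lam2 p) :: ((pred q1, S q2), INR q1 * lamT p) :: nil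
  | _ => ((q1, pred q2), mu2 p) :: ((S q1, q2), lam1 p)
             :: ((q1, S q2), lam2 p) :: ((pred q1, S q2), INR q1 * lamT p) :: nil
  end.

Definition policy := state -> nat.

Definition prio : policy := fun q =>
  let (q1, q2) := q in
  match q2 with
  | S _ => 2%nat
  | 0%nat => match q1 with S _ => 1%nat | 0%nat => 0%nat end
  end.

Definition cost (p : params) (q : state) : R :=
  h1 p * INR (fst q) + h2 p * INR (snd q) + cc p * lamT p * INR (fst q).

Definition is_zero (q : state) : bool :=
  match q with (0%nat, 0%nat) => true | _ => false end.

Definition exit_rate (p : params) (d : policy) (q : state) : R :=
  fold_right (fun tr acc => snd tr + acc) 0 (trans p (d q) q).

Definition step_sum (p : params) (d : policy) (q : state) (f : state -> R) : R :=
  fold_right (fun tr acc => snd tr / exit_rate p d q * f (fst tr) + acc) 0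
    (trans p (d q) q).

(* Embedded jump chain.  G n y = probability, from y, of being at 0 for the
   first time (times >= 0) exactly after n further jumps. *)
Fixpoint taboo_hit (p : params) (d : policy) (n : nat) (y : state) : R :=
  match n with
  | 0%nat => if is_zero y then 1 else 0
  | S k => if is_zero y then 0 else step_sum p d y (taboo_hit p d k)
  end.

(* W n y = E[ sum of w(x_i) over visited states before hitting 0 ;
   hitting 0 (first time, times >= 0) exactly after n jumps ]. *)
Fixpoint taboo_weight (p : params) (d : policy) (w : state -> R) (n : nat) (y : state) : R :=
  match n with
  | 0%nat => 0
  | S k => if is_zero y then 0 else
      step_sum p d y (fun z => w y * taboo_hit p d k z + taboo_weight p d w k z)
  end.

(* First passage from q to 0 (at least one transition): probability that it
   happens exactly at jump n+1. *)
Definition passage_prob (p : params) (d : policy) (q : state) (n : nat) : R :=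
  step_sum p d q (taboo_hit p d n).

(* Expected accumulated w-weight over a first passage from q to 0 ending
   exactly at jump n+1, where the state x_i contributes w(x_i). *)
Definition passage_weight (p : params) (d : policy) (w : state -> R) (q : state) (n : nat) : R :=
  step_sum p d q (fun z => w q * taboo_hit p d n z + taboo_weight p d w n z).

(* Expected time m_{q,0}(d) is finite: passage happens a.s. and the
   expected sum of mean holding times 1/nu(x_i) is finite.  (Given the jump
   chain, holding time in x_i is Exp(nu(x_i)), so E[time] = E[sum 1/nu(x_i)];
   on non-passage the passage time is +infinity.) *)
Definition finite_mean_passage_time (p : params) (d : policy) (q : state) : Prop :=
  infinite_sum (passage_prob p d q) 1 /\
  exists l, infinite_sum (passage_weight p d (fun x => / exit_rate p d x) q) l.

(* Expected cost c_{q,0}(d) finite: E[ sum c(x_i)/nu(x_i) ] finite, passage a.s. *)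
Definition finite_mean_passage_cost (p : params) (d : policy) (q : state) : Prop :=
  infinite_sum (passage_prob p d q) 1 /\
  exists l, infinite_sum
    (passage_weight p d (fun x => cost p x / exit_rate p d x) q) l.

Definition zero_standard (p : params) (d : policy) : Prop :=
  forall q : state, finite_mean_passage_time p d q /\ finite_mean_passage_cost p d q.

(* Main.v *)
Require Import Defs.
From Stdlib Require Import Reals Lra Lia List.
Open Scope R_scope.

Definition ss (l : list (state*R)) (nu:R) (f : state -> R) :=
  fold_right (fun tr acc => snd tr / nu * f (fst tr) + acc) 0 l.
Definition rs (l : list (state*R)) := fold_right (fun tr acc => snd tr + acc) 0 l.

Lemma ss_ext l nu f g : (forall z, f z = g z) -> ss l nu f = ss l nu g.
Proof. intros H; induction l as [|a l IH]; simpl; auto. rewrite H, IH; auto. Qed.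
Lemma ss_plus l nu f g : ss l nu (fun z => f z + g z) = ss l nu f + ss l nu g.
Proof. induction l as [|a l IH]; simpl. ring. rewrite IH; ring. Qed.
Lemma ss_minus l nu f g : ss l nu (fun z => f z - g z) = ss l nu f - ss l nu g.
Proof. induction l as [|a l IH]; simpl. ring. rewrite IH; ring. Qed.
Lemma ss_scal l nu c f : ss l nu (fun z => c * f z) = c * ss l nu f.
Proof. induction l as [|a l IH]; simpl. ring. rewrite IH; ring. Qed.
Lemma ss_const l nu c : ss l nu (fun _ => c) = c * rs l / nu.
Proof. induction l as [|a l IH]; simpl. unfold Rdiv; ring. rewrite IH; unfold Rdiv; ring. Qed.
Lemma ss_div l nu f : ss l nu f = fold_right (fun tr acc => snd tr * f (fst tr) + acc) 0 l / nu.
Proof. induction l as [|a l IH]; simpl. unfold Rdiv; ring. rewrite IH; unfold Rdiv; ring. Qed.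
Lemma ss_mono l nu f g : 0 < nu -> Forall (fun tr => 0 <= snd tr) l ->
  (forall z, f z <= g z) -> ss l nu f <= ss l nu g.
Proof.
  intros Hnu Hl H; induction Hl as [|a l Ha Hl IH]; simpl. lra.
  apply Rplus_le_compat; auto. apply Rmult_le_compat_l; auto.
  unfold Rdiv; apply Rmult_le_pos; auto. left; apply Rinv_0_lt_compat; auto.
Qed.
Lemma ss_sum l nu (F : nat -> state -> R) N :
  ss l nu (fun z => sum_f_R0 (fun n => F n z) N) = sum_f_R0 (fun n => ss l nu (F n)) N.
Proof.
  induction N; simpl. apply ss_ext; auto.
  rewrite <- IHN. rewrite <- ss_plus. apply ss_ext; auto.
Qed.

Definition good (p : params) (d : policy) :=
  (forall y, 0 < exit_rate p d y) /\ (forall y, Forall (fun tr => 0 <= snd tr) (trans p (d y) y)).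

Lemma st_ss p d q f : step_sum p d q f = ss (trans p (d q) q) (exit_rate p d q) f.
Proof. reflexivity. Qed.

Lemma st_mono p d q f g : good p d -> (forall z, f z <= g z) -> step_sum p d q f <= step_sum p d q g.
Proof. intros [H1 H2] H. rewrite !st_ss. apply ss_mono; auto. Qed.
Lemma st_const p d q c : good p d -> step_sum p d q (fun _ => c) = c.
Proof. intros [H1 H2]. rewrite st_ss, ss_const. specialize (H1 q).
  unfold exit_rate in *. fold (rs (trans p (d q) q)) in *. field. lra. Qed.

Lemma st_aff p d q a V : good p d -> step_sum p d q (fun z => a * 1 + V z) = a + step_sum p d q V.
Proof. intros G. rewrite !st_ss, ss_plus, <- (st_ss p d q V). f_equal.
  rewrite <- st_ss. rewrite Rmult_1_r. apply st_const; auto. Qed.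

Lemma sum_front (f : nat -> R) N : sum_f_R0 f (S N) = f 0%nat + sum_f_R0 (fun i => f (S i)) N.
Proof. induction N. simpl; ring. rewrite (tech5 f (S N)), IHN. simpl. ring. Qed.


Lemma hit0 p d y : taboo_hit p d 0 y = if is_zero y then 1 else 0.
Proof. reflexivity. Qed.
Lemma hitS p d k y : taboo_hit p d (S k) y = if is_zero y then 0 else step_sum p d y (taboo_hit p d k).
Proof. reflexivity. Qed.
Lemma tw0 p d w y : taboo_weight p d w 0 y = 0.
Proof. reflexivity. Qed.
Lemma twS p d w k y : taboo_weight p d w (S k) y = if is_zero y then 0 else
      step_sum p d y (fun z => w y * taboo_hit p d k z + taboo_weight p d w k z).
Proof. reflexivity. Qed.

Lemma sum0 (f : nat -> R) : sum_f_R0 f 0 = f 0%nat.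
Proof. reflexivity. Qed.

Lemma sum_scal_l c (f : nat -> R) N : sum_f_R0 (fun i => c * f i) N = c * sum_f_R0 f N.
Proof. induction N; simpl; try rewrite IHN; ring. Qed.

Definition Hs p d N y := sum_f_R0 (fun n => taboo_hit p d n y) N.

Lemma hit_nn p d n y : good p d -> 0 <= taboo_hit p d n y.
Proof.
  intros G; revert y; induction n; intros y; rewrite ?hit0, ?hitS; destruct (is_zero y); try lra.
  rewrite <- (st_const p d y 0 G). apply st_mono; auto.
Qed.

Lemma Hs_zero p d N y : is_zero y = true -> Hs p d N y = 1.
Proof. intros Hz; unfold Hs; induction N. rewrite sum0, hit0, Hz; auto.
  rewrite tech5, IHN, hitS, Hz. ring. Qed.

Lemma Hs_S p d N y : is_zero y = false -> Hs p d (S N) y = step_sum p d y (Hs p d N).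
Proof. intros Hz; unfold Hs. rewrite sum_front, hit0, Hz.
  rewrite st_ss. rewrite ss_sum. rewrite Rplus_0_l.
  apply sum_eq. intros i _. rewrite hitS, Hz. reflexivity. Qed.

Lemma Hs_le1 p d N y : good p d -> Hs p d N y <= 1.
Proof. intros G; revert y; induction N; intros y.
  unfold Hs; rewrite sum0, hit0; destruct (is_zero y); lra.
  destruct (is_zero y) eqn:Hz. rewrite Hs_zero; auto; lra.
  rewrite Hs_S; auto. rewrite <- (st_const p d y 1 G). apply st_mono; auto. Qed.

Lemma Hs_mono p d N y : good p d -> Hs p d N y <= Hs p d (S N) y.
Proof. intros G. unfold Hs. rewrite tech5. pose proof (hit_nn p d (S N) y G). lra. Qed.

Definition Sv p d N y := 1 - Hs p d N y.

Lemma Sv_anti p d k m y : good p d -> Sv p d (k + m) y <= Sv p d k y.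
Proof. intros G; induction m. rewrite Nat.add_0_r; lra.
  rewrite Nat.add_succ_r. unfold Sv in *. pose proof (Hs_mono p d (k+m) y G). lra. Qed.

Lemma U_bound p d V : good p d -> (forall y, 0 <= V y) ->
  (forall y, is_zero y = false -> 1 + step_sum p d y V <= V y) ->
  forall N y, sum_f_R0 (fun k => Sv p d k y) N <= V y.
Proof.
  intros G HV HD N. induction N; intros y; destruct (is_zero y) eqn:Hz.
  - rewrite sum0. unfold Sv. rewrite Hs_zero; auto. rewrite Rminus_diag; auto.
  - rewrite sum0. unfold Sv, Hs; rewrite sum0, hit0, Hz. specialize (HD y Hz).
    assert (0 <= step_sum p d y V). rewrite <- (st_const p d y 0 G). apply st_mono; auto. lra.
  - rewrite (sum_eq _ (fun _ => 0)). rewrite sum_cte. rewrite Rmult_0_l; auto.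
    intros i _. unfold Sv. rewrite Hs_zero; auto. ring.
  - rewrite sum_front. unfold Sv at 1, Hs at 1; rewrite sum0, hit0, Hz.
    rewrite (sum_eq _ (fun i => step_sum p d y (Sv p d i))).
    2:{ intros i _. unfold Sv at 1. rewrite Hs_S; auto. rewrite st_ss.
        rewrite <- (st_const p d y 1 G) at 1. rewrite st_ss, <- ss_minus. reflexivity. }
    replace (sum_f_R0 (fun i => step_sum p d y (Sv p d i)) N) with (step_sum p d y (fun z => sum_f_R0 (fun n => Sv p d n z) N)) by (rewrite st_ss, ss_sum; reflexivity).
    specialize (HD y Hz).
    assert (step_sum p d y (fun z => sum_f_R0 (fun n => Sv p d n z) N) <= step_sum p d y V).
    apply st_mono; auto. lra.
Qed.

Lemma Sv_bound p d V : good p d -> (forall y, 0 <= V y) ->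
  (forall y, is_zero y = false -> 1 + step_sum p d y V <= V y) ->
  forall N y, 0 <= Sv p d N y <= V y / INR (S N).
Proof.
  intros G HV HD N y. split. unfold Sv; pose proof (Hs_le1 p d N y G); lra.
  pose proof (U_bound p d V G HV HD N y).
  assert (Hc : sum_f_R0 (fun _ => Sv p d N y) N <= sum_f_R0 (fun k => Sv p d k y) N).
  { apply sum_Rle. intros n Hn. replace N with (n + (N - n))%nat by lia. apply Sv_anti; auto. }
  rewrite sum_cte in Hc. pose proof (lt_0_INR (S N) (Nat.lt_0_succ N)).
  apply (Rmult_le_reg_r (INR (S N))); auto. unfold Rdiv. rewrite Rmult_assoc, Rinv_l; lra.
Qed.

Lemma prob_one p d V q : good p d -> (forall y, 0 <= V y) ->
  (forall y, is_zero y = false -> 1 + step_sum p d y V <= V y) ->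
  infinite_sum (passage_prob p d q) 1.
Proof.
  intros G HV HD eps Heps.
  set (A := step_sum p d q V).
  assert (HA : 0 <= A). unfold A; rewrite <- (st_const p d q 0 G). apply st_mono; auto.
  destruct (archimed_cor1 (eps / (A+1))) as [N [HN HN0]].
  { unfold Rdiv; apply Rmult_lt_0_compat; auto. apply Rinv_0_lt_compat; lra. }
  exists N. intros n Hn.
  assert (E : sum_f_R0 (passage_prob p d q) n = 1 - step_sum p d q (Sv p d n)).
  { replace (sum_f_R0 (passage_prob p d q) n) with (step_sum p d q (Hs p d n))
      by (unfold Hs; rewrite st_ss, ss_sum; reflexivity). rewrite <- (st_const p d q 1 G) at 1.
    rewrite !st_ss, <- ss_minus. apply ss_ext. intros z. unfold Sv, Hs. ring. }
  rewrite E.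
  assert (B1 : 0 <= step_sum p d q (Sv p d n)).
  { rewrite <- (st_const p d q 0 G). apply st_mono; auto. intros; apply (Sv_bound p d V); auto. }
  assert (B2 : step_sum p d q (Sv p d n) <= A * / INR (S n)).
  { unfold A. rewrite st_ss, st_ss. rewrite Rmult_comm, <- ss_scal. apply st_mono; auto.
    intros z. rewrite Rmult_comm. apply (Sv_bound p d V); auto. }
  assert (HN1 : 0 < INR N) by (apply lt_0_INR; auto).
  assert (HN2 : INR N <= INR (S n)) by (apply le_INR; lia).
  assert (I1 : / INR (S n) <= / INR N) by (apply Rinv_le_contravar; auto).
  assert (I2 : A * / INR (S n) <= (A+1) * / INR N).
  { apply Rmult_le_compat; try lra. left; apply Rinv_0_lt_compat; lra. }
  assert (I3 : (A+1) * / INR N < (A+1) * (eps / (A+1))) by (apply Rmult_lt_compat_l; lra).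
  replace ((A+1) * (eps / (A+1))) with eps in I3 by (field; lra).
  unfold Rdist. rewrite Rabs_left1; lra.
Qed.

Definition Ws p d w N y := sum_f_R0 (fun n => taboo_weight p d w n y) N.

Lemma tw_nn p d w n y : good p d -> (forall y, 0 <= w y) -> 0 <= taboo_weight p d w n y.
Proof.
  intros G Hw; revert y; induction n; intros y. rewrite tw0; lra. rewrite twS. destruct (is_zero y). lra.
  rewrite <- (st_const p d y 0 G). apply st_mono; auto. intros z.
  pose proof (hit_nn p d n z G). pose proof (Hw y). pose proof (IHn z). nra.
Qed.

Lemma Ws_zero p d w N y : is_zero y = true -> Ws p d w N y = 0.
Proof. intros Hz. unfold Ws. rewrite (sum_eq _ (fun _ => 0)). rewrite sum_cte; ring.
  intros i _. destruct i. apply tw0. rewrite twS, Hz; auto. Qed.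

Lemma Ws_bound p d w V : good p d -> (forall y, 0 <= w y) -> (forall y, 0 <= V y) ->
  (forall y, is_zero y = false -> w y + step_sum p d y V <= V y) ->
  forall N y, Ws p d w N y <= V y.
Proof.
  intros G Hw HV HD N. induction N; intros y.
  unfold Ws; rewrite sum0, tw0; auto.
  destruct (is_zero y) eqn:Hz. rewrite Ws_zero; auto.
  unfold Ws. rewrite sum_front, tw0.
  rewrite (sum_eq _ (fun i => step_sum p d y (fun z => w y * taboo_hit p d i z + taboo_weight p d w i z))).
  2:{ intros i _. rewrite twS, Hz. auto. }
  replace (sum_f_R0 (fun i => step_sum p d y (fun z => w y * taboo_hit p d i z + taboo_weight p d w i z)) N)
   with (step_sum p d y (fun z => sum_f_R0 (fun n => w y * taboo_hit p d n z + taboo_weight p d w n z) N))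
   by (rewrite st_ss, ss_sum; reflexivity).
  assert (step_sum p d y (fun z => sum_f_R0 (fun n => w y * taboo_hit p d n z + taboo_weight p d w n z) N)
     <= step_sum p d y (fun z => w y * 1 + V z)).
  { apply st_mono; auto. intros z.
    rewrite sum_plus, sum_scal_l.
    apply Rplus_le_compat. apply Rmult_le_compat_l; auto. apply (Hs_le1 p d N z G).
    apply IHN. }
  rewrite st_aff in H; auto.
  specialize (HD y Hz). lra.
Qed.

Lemma weight_fin p d w V q : good p d -> (forall y, 0 <= w y) -> (forall y, 0 <= V y) ->
  (forall y, is_zero y = false -> w y + step_sum p d y V <= V y) ->
  exists l, infinite_sum (passage_weight p d w q) l.
Proof.
  intros G Hw HV HD.
  assert (Hnn : forall n, 0 <= passage_weight p d w q n).
  { intros n. unfold passage_weight. rewrite <- (st_const p d q 0 G). apply st_mono; auto.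
    intros z. pose proof (hit_nn p d n z G). pose proof (Hw q). pose proof (tw_nn p d w n z G Hw). nra. }
  destruct (growing_cv (sum_f_R0 (passage_weight p d w q))) as [l Hl].
  - intros n. simpl. specialize (Hnn (S n)). lra.
  - exists (w q + step_sum p d q V). intros x [n ->].
    replace (sum_f_R0 (passage_weight p d w q) n) with
      (step_sum p d q (fun z => sum_f_R0 (fun n => w q * taboo_hit p d n z + taboo_weight p d w n z) n))
      by (rewrite st_ss, ss_sum; reflexivity).
    replace (w q + step_sum p d q V) with (step_sum p d q (fun z => w q * 1 + V z)).
    2:{ apply st_aff; auto. }
    apply st_mono; auto. intros z. rewrite sum_plus, sum_scal_l.
    apply Rplus_le_compat. apply Rmult_le_compat_l; auto. apply (Hs_le1 p d n z G).
    apply (Ws_bound p d w V); auto.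
  - exists l. exact Hl.
Qed.

Definition Vr K M b x y := K*((x+b*y)^2 + M*(x+b*y)).

Lemma final K M b dl C lT h1 h2 c x Y GL SQ nu :
  0<K -> 1<=M -> 0<b -> b<1 -> 0<dl -> C+1 <= M*dl -> C+1 <= K ->
  lT+h1+c*lT <= K*dl -> h2 <= K*dl*b -> 0<=x -> 0<=Y -> 0<lT -> 0<=h1 -> 0<=h2 -> 0<=c ->
  GL <= -dl - (1-b)*lT*x -> SQ <= C + x*lT*(1-b)^2 -> nu <= C + x*lT ->
  K*((2*(x+b*Y)+M)*GL + SQ) <= -(nu + 1 + (h1*x + h2*Y + c*lT*x)).
Proof.
  intros. set (L := x + b*Y).
  assert (HL : 0 <= L) by (unfold L; nra).
  assert (A : (2*L+M)*GL <= (2*L+M)*(-dl - (1-b)*lT*x)) by (apply Rmult_le_compat_l; lra).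
  assert (B : x*lT*(1-b)^2 <= M*(1-b)*lT*x).
  { assert (0 <= x*lT) by nra. assert ((1-b)^2 <= M*(1-b)) by nra. nra. }
  assert (C1 : 0 <= 2*L*(1-b)*lT*x).
  { assert (0 <= x*lT) by nra. assert (0 <= 2*L*(1-b)) by nra. nra. }
  assert (T : (2*L+M)*GL + SQ <= -2*L*dl - 1) by nra.
  assert (T2 : K*((2*L+M)*GL + SQ) <= K*(-2*L*dl - 1)) by (apply Rmult_le_compat_l; lra).
  assert (P1 : (lT+h1+c*lT)*x <= K*dl*x) by (apply Rmult_le_compat_r; lra).
  assert (P2 : h2*Y <= K*dl*b*Y) by (apply Rmult_le_compat_r; lra).
  assert (P3 : 0 <= K*dl*x) by (apply Rmult_le_pos; nra).
  assert (P4 : 0 <= K*dl*b*Y) by (apply Rmult_le_pos; nra).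
  assert (E : K*(-2*L*dl - 1) = - 2*(K*dl*x) - 2*(K*dl*b*Y) - K) by (unfold L; ring).
  nra.
Qed.


Lemma alg2 K M b dl C m2 l1 l2 lT h1 h2 c x z X1 :
  0<K -> 1<=M -> 0<b -> b<1 -> 0<dl -> C+1 <= M*dl -> C+1 <= K ->
  lT+h1+c*lT <= K*dl -> h2 <= K*dl*b -> 0<=x -> 0<=z -> 0<lT -> 0<=h1 -> 0<=h2 -> 0<=c ->
  0 < m2 -> 0 < l1 -> 0 < l2 -> m2 + l1 + l2 <= C -> dl <= b*(m2-l2) - l1 ->
  x * X1 = x * Vr K M b (x-1) (z+1+1) ->
  m2*Vr K M b x z + (l1*Vr K M b (x+1) (z+1) + (l2*Vr K M b x (z+1+1) + (x*lT*X1 + 0)))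
  <= (m2 + (l1 + (l2 + (x*lT + 0)))) * Vr K M b x (z+1) - (m2 + (l1 + (l2 + (x*lT + 0))))
     - (1 + (h1*x + h2*(z+1) + c*lT*x)).
Proof.
  intros HK HM Hb0 Hb1 Hdl HMd HKC HKd HKb Hx Hz HlT Hh1 Hh2 Hc Hm2 Hl1 Hl2 HC Hd HX1.
  set (nu := m2 + (l1 + (l2 + (x*lT + 0)))).
  assert (E : m2*Vr K M b x z + (l1*Vr K M b (x+1) (z+1) + (l2*Vr K M b x (z+1+1) + (x*lT*X1 + 0)))
     - nu * Vr K M b x (z+1) =
     K*((2*(x+b*(z+1))+M)*(-b*m2 + l1 + l2*b + x*lT*(b-1)) + (m2*b^2 + l1 + l2*b^2 + x*lT*(b-1)^2))).
  { replace (x*lT*X1) with (lT*(x*X1)) by ring. rewrite HX1. unfold nu, Vr. ring. }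
  assert (F := final K M b dl C lT h1 h2 c x (z+1) (-b*m2 + l1 + l2*b + x*lT*(b-1))
      (m2*b^2 + l1 + l2*b^2 + x*lT*(b-1)^2) nu).
  assert (Hb2 : 0 <= b^2 <= 1) by nra.
  assert (Hnu : nu <= C + x*lT) by (unfold nu; lra).
  assert (HSQ : m2*b^2 + l1 + l2*b^2 + x*lT*(b-1)^2 <= C + x*lT*(1-b)^2).
  { replace ((b-1)^2) with ((1-b)^2) by ring. nra. }
  assert (HGL : -b*m2 + l1 + l2*b + x*lT*(b-1) <= -dl - (1-b)*lT*x) by nra.
  assert (HY : 0 <= z+1) by lra.
  specialize (F HK HM Hb0 Hb1 Hdl HMd HKC HKd HKb Hx HY HlT Hh1 Hh2 Hc HGL HSQ Hnu). lra.
Qed.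

Lemma alg1 K M b dl C m1 l1 l2 lT h1 h2 c u :
  0<K -> 1<=M -> 0<b -> b<1 -> 0<dl -> C+1 <= M*dl -> C+1 <= K ->
  lT+h1+c*lT <= K*dl -> h2 <= K*dl*b -> 0<=u -> 0<lT -> 0<=h1 -> 0<=h2 -> 0<=c ->
  0 < m1 -> 0 < l1 -> 0 < l2 -> m1 + l1 + l2 <= C -> dl <= m1 - l1 - l2*b ->
  m1*Vr K M b u 0 + (l1*Vr K M b (u+1+1) 0 + (l2*Vr K M b (u+1) 1 + ((u+1)*lT*Vr K M b u 1 + 0)))
  <= (m1 + (l1 + (l2 + ((u+1)*lT + 0)))) * Vr K M b (u+1) 0 - (m1 + (l1 + (l2 + ((u+1)*lT + 0))))
     - (1 + (h1*(u+1) + h2*0 + c*lT*(u+1))).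
Proof.
  intros HK HM Hb0 Hb1 Hdl HMd HKC HKd HKb Hu HlT Hh1 Hh2 Hc Hm1 Hl1 Hl2 HC Hd.
  set (nu := m1 + (l1 + (l2 + ((u+1)*lT + 0)))). set (x := u+1).
  assert (E : m1*Vr K M b u 0 + (l1*Vr K M b (x+1) 0 + (l2*Vr K M b x 1 + (x*lT*Vr K M b u 1 + 0)))
     - nu * Vr K M b x 0 =
     K*((2*(x+b*0)+M)*(-m1 + l1 + l2*b + x*lT*(b-1)) + (m1 + l1 + l2*b^2 + x*lT*(b-1)^2))).
  { unfold nu, Vr, x. ring. }
  assert (F := final K M b dl C lT h1 h2 c x 0 (-m1 + l1 + l2*b + x*lT*(b-1))
      (m1 + l1 + l2*b^2 + x*lT*(b-1)^2) nu).
  assert (Hb2 : 0 <= b^2 <= 1) by nra.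
  assert (Hnu : nu <= C + x*lT) by (unfold nu, x; lra).
  assert (HSQ : m1 + l1 + l2*b^2 + x*lT*(b-1)^2 <= C + x*lT*(1-b)^2).
  { replace ((b-1)^2) with ((1-b)^2) by ring. nra. }
  assert (HGL : -m1 + l1 + l2*b + x*lT*(b-1) <= -dl - (1-b)*lT*x) by nra.
  assert (Hx : 0 <= x) by (unfold x; lra).
  specialize (F HK HM Hb0 Hb1 Hdl HMd HKC HKd HKb Hx (Rle_refl 0) HlT Hh1 Hh2 Hc HGL HSQ Hnu).
  fold x. lra.
Qed.

Definition Vf K M b (q : state) := Vr K M b (INR (fst q)) (INR (snd q)).

Lemma divl G nu V w : 0 < nu -> G <= nu*V - nu - w -> G/nu <= V - 1 - w/nu.
Proof. intros Hn HG. apply (Rmult_le_reg_r nu); auto.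
  replace ((V - 1 - w/nu)*nu) with (nu*V - nu - w) by (field; lra).
  unfold Rdiv; rewrite Rmult_assoc, Rinv_l; lra. Qed.

Definition hyps (P : params) K M b dl C :=
  0<K /\ 1<=M /\ 0<b /\ b<1 /\ 0<dl /\ C+1 <= M*dl /\ C+1 <= K /\
  lamT P+h1 P+cc P*lamT P <= K*dl /\ h2 P <= K*dl*b /\ 0<lamT P /\ 0<=h1 P /\ 0<=h2 P /\ 0<=cc P /\
  0 < mu1 P /\ 0 < mu2 P /\ 0 < lam1 P /\ 0 < lam2 P /\ mu1 P + mu2 P + lam1 P + lam2 P <= C /\
  dl <= b*(mu2 P - lam2 P) - lam1 P /\ dl <= mu1 P - lam1 P - lam2 P*b.

Lemma drift P K M b dl C : hyps P K M b dl C -> (forall y, 0 < exit_rate P prio y) ->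
  forall y, is_zero y = false ->
  step_sum P prio y (Vf K M b) <= Vf K M b y - 1 - (1 + cost P y)/exit_rate P prio y.
Proof.
  intros (HK & HM & Hb0 & Hb1 & Hdl & HMd & HKC & HKd & HKb & HlT & Hh1 & Hh2 & Hc & Hm1 & Hm2 & Hl1 & Hl2 & HC & Hd2 & Hd1) Hpos.
  intros [q1 q2] Hz. rewrite st_ss, ss_div. apply divl; [apply Hpos|].
  destruct q2 as [|k].
  - destruct q1 as [|j]; [discriminate|].
    cbv beta iota zeta delta [exit_rate trans prio fold_right fst snd pred Vf cost].
    rewrite ?INR_1, !S_INR, ?INR_0.
    apply (alg1 K M b dl C); auto; try lra. apply pos_INR.
  - destruct q1 as [|i].
    + cbv beta iota zeta delta [exit_rate trans prio fold_right fst snd pred Vf cost].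
      rewrite !S_INR, ?INR_0.
      apply (alg2 K M b dl C _ _ _ _ _ _ _ 0 (INR k) (Vr K M b 0 (INR k + 1 + 1))); auto; try lra;
      try apply pos_INR; try ring.
    + cbv beta iota zeta delta [exit_rate trans prio fold_right fst snd pred Vf cost].
      rewrite !S_INR.
      apply (alg2 K M b dl C _ _ _ _ _ _ _ (INR i + 1) (INR k) (Vr K M b (INR i) (INR k + 1 + 1))); auto; try lra.
      all: try (pose proof (pos_INR i); lra); try apply pos_INR.
      replace (INR i + 1 - 1) with (INR i) by ring. reflexivity.
Qed.

Lemma good_prio P : 0 < lam1 P -> 0 < lam2 P -> 0 < mu1 P -> 0 < mu2 P -> 0 < lamT P -> good P prio.
Proof.
  intros. split.
  - intros [q1 q2]. pose proof (pos_INR q1).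
    assert (0 <= INR q1 * lamT P) by (apply Rmult_le_pos; lra).
    destruct q2; [destruct q1|]; cbv beta iota zeta delta [exit_rate trans prio fold_right fst snd]; lra.
  - intros [q1 q2]. pose proof (pos_INR q1).
    assert (0 <= INR q1 * lamT P) by (apply Rmult_le_pos; lra).
    destruct q2; [destruct q1|]; cbv beta iota zeta delta [trans prio];
    repeat (apply Forall_cons; [cbn [snd]; lra|]); apply Forall_nil.
Qed.

Theorem mainTheorem9 (l1 l2 m1 m2 lT hh1 hh2 c : R)
  (Hl1 : 0 < l1) (Hl2 : 0 < l2) (Hm1 : 0 < m1) (Hm2 : 0 < m2) (HlT : 0 < lT)
  (Hh1 : 0 <= hh1) (Hh2 : 0 <= hh2) (Hc : 0 <= c)
  (Hstab : l1 + l2 < Rmin m1 m2) :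
  zero_standard (Params l1 l2 m1 m2 lT hh1 hh2 c) prio.
Proof.
  set (P := Params l1 l2 m1 m2 lT hh1 hh2 c).
  assert (G : good P prio) by (apply good_prio; simpl; auto).
  pose proof (Rmin_l m1 m2) as Rm1. pose proof (Rmin_r m1 m2) as Rm2.
  set (C := m1 + m2 + l1 + l2).
  set (r := l1/(m2-l2)).
  assert (Hr : 0 < r < 1).
  { unfold r; split. apply Rdiv_lt_0_compat; lra.
    apply (Rmult_lt_reg_r (m2 - l2)); try lra. unfold Rdiv; rewrite Rmult_assoc, Rinv_l; lra. }
  assert (Hr2 : r * (m2 - l2) = l1) by (unfold r; field; lra).
  set (b := (1 + r)/2).
  set (dl := (Rmin m1 m2 - l1 - l2)/2).
  set (M := (C+1)/dl + 1).
  set (K := C + 1 + (lT + hh1 + c*lT)/dl + hh2/(dl*b)).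
  assert (Hdl : 0 < dl) by (unfold dl; lra).
  assert (Hb : 0 < b < 1) by (unfold b; lra).
  assert (HA : 0 <= (lT + hh1 + c*lT)/dl).
  { apply Rmult_le_pos; [nra | left; apply Rinv_0_lt_compat; lra]. }
  assert (HB : 0 <= hh2/(dl*b)).
  { apply Rmult_le_pos; [lra | left; apply Rinv_0_lt_compat; nra]. }
  assert (HC0 : 0 < C) by (unfold C; lra).
  assert (H : hyps P K M b dl C).
  { unfold hyps; simpl. 
    assert (HMd : M*dl = C + 1 + dl) by (unfold M; field; lra).
    assert (HKd : K*dl = (C+1)*dl + (lT + hh1 + c*lT) + hh2/b) by (unfold K; field; lra).
    assert (HKb : K*dl*b = (C+1)*dl*b + (lT + hh1 + c*lT)*b + hh2) by (unfold K; field; lra).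
    assert (0 <= hh2/b) by (apply Rmult_le_pos; [lra | left; apply Rinv_0_lt_compat; lra]).
    assert (0 <= lT + hh1 + c*lT) by nra.
    assert (0 <= (lT + hh1 + c*lT)*b) by (apply Rmult_le_pos; lra).
    assert (0 <= (C+1)*dl) by (apply Rmult_le_pos; lra).
    assert (0 <= (C+1)*dl*b) by (apply Rmult_le_pos; lra).
    assert (0 <= (C+1)/dl) by (apply Rmult_le_pos; [lra | left; apply Rinv_0_lt_compat; lra]).
    assert (HKC : C + 1 <= K) by (unfold K; lra).
    assert (HM1 : 1 <= M) by (unfold M; lra).
    repeat split; try lra.
    - unfold C; lra.
    - assert (b*(m2-l2) - l1 = (m2 - l2 - l1)/2) by (unfold b; rewrite <- Hr2; field).
      unfold dl; lra.
    - assert (l2*b <= l2) by nra. unfold dl; lra. }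
  assert (HV : forall y, 0 <= Vf K M b y).
  { intros [q1 q2]. unfold Vf, Vr; simpl. pose proof (pos_INR q1). pose proof (pos_INR q2).
    destruct H as (HK & HM & _).
    assert (0 <= INR q1 + b * INR q2) by nra.
    apply Rmult_le_pos; lra + nra. }
  assert (Hpos : forall y, 0 < exit_rate P prio y) by apply G.
  pose proof (drift P K M b dl C H Hpos) as D.
  assert (Hcost : forall y, 0 <= cost P y).
  { intros [q1 q2]; unfold cost, P; cbn [fst snd h1 h2 cc lamT]. pose proof (pos_INR q1). pose proof (pos_INR q2).
    assert (0 <= hh1 * INR q1) by (apply Rmult_le_pos; lra).
    assert (0 <= hh2 * INR q2) by (apply Rmult_le_pos; lra).
    assert (0 <= c * lT * INR q1) by (apply Rmult_le_pos; [apply Rmult_le_pos|]; lra). lra. }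
  assert (D1 : forall y, is_zero y = false -> 1 + step_sum P prio y (Vf K M b) <= Vf K M b y).
  { intros y Hz. specialize (D y Hz). specialize (Hcost y). specialize (Hpos y).
    assert (0 <= (1 + cost P y)/exit_rate P prio y) by (apply Rmult_le_pos; [lra| left; apply Rinv_0_lt_compat; lra]).
    lra. }
  intros q. split; split.
  - apply (prob_one P prio (Vf K M b)); auto.
  - apply (weight_fin P prio _ (Vf K M b)); auto.
    + intros y; left; apply Rinv_0_lt_compat; auto.
    + intros y Hz. specialize (D y Hz). specialize (Hcost y). specialize (Hpos y).
      assert (/ exit_rate P prio y <= (1 + cost P y)/exit_rate P prio y).
      { unfold Rdiv. rewrite <- (Rmult_1_l (/ exit_rate P prio y)) at 1.
        apply Rmult_le_compat_r; [left; apply Rinv_0_lt_compat|]; lra. }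
      lra.
  - apply (prob_one P prio (Vf K M b)); auto.
  - apply (weight_fin P prio _ (Vf K M b)); auto.
    + intros y. specialize (Hcost y). specialize (Hpos y).
      apply Rmult_le_pos; [lra| left; apply Rinv_0_lt_compat; lra].
    + intros y Hz. specialize (D y Hz). specialize (Hcost y). specialize (Hpos y).
      assert (cost P y / exit_rate P prio y <= (1 + cost P y)/exit_rate P prio y).
      { apply Rmult_le_compat_r; [left; apply Rinv_0_lt_compat|]; lra. }
      lra.
Qed.
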